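(* Let $P\in\mathcal X$ be positive definite and let $Z_n$, $n=1,2,\dots$, be a sequence of traceless Hermitian matrices in $\mathbb H^d$ such that $F(P,Z_n)$ is constant in $n$. Then the eigenvalues $\{z_{k,n}\}_{k=1,\dots,d}$ of $Z_n$ are uniformly bounded: $\sup_{k,n}|z_{k,n}|<\infty$.
   Context: Single player: $d\ge1$, $\mathbb H^d$ is the real vector space of $d\times d$ complex Hermitian matrices; $\mathcal X=\{X\in\mathbb H^d:X\succeq0,\operatorname{tr}X=1\}$. For Hermitian $A=\sum_k\lambda_kv_kv_k^\dagger$, $f(A)=\sum_kf(\lambda_k)v_kv_k^\dagger$. Regularizer $h(X)=\operatorname{tr}\theta(X)$ with $\theta:[0,1]\to\mathbb R$ continuous, twice differentiable on $(0,1]$, $\theta(0)=0$, $\inf_{(0,1]}\theta''>0$. Mirror map $Q(Y)=\arg\max_{X\in\mathcal X}\{\operatorname{tr}(YX)-h(X)\}$. Convex conjugate $h^*(Y)=\max_{X\in\mathcal X}\{\operatorname{tr}(YX)-h(X)\}$. Fenchel coupling $F(P,Y)=h(P)+h^*(Y)-\operatorname{tr}(PY)$ for $P\in\mathcal X$, $Y\in\mathbb H^d$. *)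

(* Defs.v *)
From HB Require Import structures.
From mathcomp Require Import all_boot all_order all_algebra.
From mathcomp Require Import sesquilinear spectral.
From mathcomp Require Import complex.
From mathcomp Require Import all_classical all_reals all_analysis.
Set Implicit Arguments. Unset Strict Implicit. Unset Printing Implicit Defensive.
Import Order.TTheory GRing.Theory Num.Theory.
Import numFieldNormedType.Exports.
Local Open Scope ring_scope.
Local Open Scope classical_set_scope.
Local Open Scope sesquilinear_scope.

Section Defs.
Variable R : realType.
Local Notation C := (R[i]).

Definition reC (z : C) : R := complex.Re z.

Definition psdmx d (A : 'M[C]_d) : Prop :=
  A \is hermsymmx /\ forall v : 'rV[C]_d, 0 <= (v *m A *m v ^t*) 0 0.

Definition posdefmx d (A : 'M[C]_d) : Prop :=
  A \is hermsymmx /\ forall v : 'rV[C]_d, v != 0 -> 0 < (v *m A *m v ^t*) 0 0.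

Definition densities d : set 'M[C]_d :=
  [set X | psdmx X /\ \tr X = 1].

(* functional calculus: for A = U^-1 diag(lambda) U (U unitary, from the library's
   spectral decomposition of normal matrices), f(A) = U^-1 diag(f(lambda)) U,
   i.e. f(A) = sum_k f(lambda_k) v_k v_k^dagger. Eigenvalues of Hermitian
   matrices are real, so f is applied to their real part. *)
Definition mxfun d (f : R -> R) (A : 'M[C]_d) : 'M[C]_d :=
  invmx (spectralmx A)
    *m diag_mx (map_mx (fun z : C => ((f (reC z))%:C)%C) (spectral_diag A))
    *m spectralmx A.

(* regularizer h(X) = tr theta(X) (a real number since theta(X) is Hermitian) *)
Definition hreg d (theta : R -> R) (X : 'M[C]_d) : R := reC (\tr (mxfun theta X)).

Definition trdot d (Y X : 'M[C]_d) : R := reC (\tr (Y *m X)).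

(* convex conjugate h^*(Y) = max_{X in densities} (tr(YX) - h(X)); the maximum
   exists (continuous function on a compact set), so it equals the supremum *)
Definition hconj d (theta : R -> R) (Y : 'M[C]_d) : R :=
  sup [set trdot Y X - hreg theta X | X in @densities d].

Definition fenchel d (theta : R -> R) (P Y : 'M[C]_d) : R :=
  hreg theta P + hconj theta Y - trdot P Y.

Definition deriv_on_0_1 (f g : R -> R) : Prop :=
  forall x : R, 0 < x <= 1 ->
    (h^-1 * (f (x + h) - f x) @[h --> (0:R)^'-] --> g x) /\
    (x < 1 -> h^-1 * (f (x + h) - f x) @[h --> (0:R)^'+] --> g x).

(* standing assumptions on theta : [0,1] -> R (values outside [0,1] irrelevant) *)
Definition admissible_theta (theta : R -> R) : Prop :=
  {within `[0, 1], continuous theta} /\ theta 0 = 0 /\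
  exists theta1 theta2 : R -> R,
    deriv_on_0_1 theta theta1 /\ deriv_on_0_1 theta1 theta2 /\
    exists m : R, 0 < m /\ forall x : R, 0 < x <= 1 -> m <= theta2 x.

End Defs.
Arguments densities {R} d.

(* Main.v *)
Set Warnings "-all".
Require Import Defs.
From HB Require Import structures.
From mathcomp Require Import all_boot all_order all_algebra.
From mathcomp Require Import sesquilinear spectral.
From mathcomp Require Import complex.
From mathcomp Require Import all_classical all_reals all_analysis.
From mathcomp Require Import ring lra.
Import Order.TTheory GRing.Theory Num.Theory.
Local Open Scope ring_scope.
Local Open Scope sesquilinear_scope.

Lemma herm_tC (C : numClosedFieldType) n (A : 'M[C]_n) :
  A \is hermsymmx -> A^t* = A.
Proof. by move/is_hermitianmxP; rewrite expr0 scale1r => {2}->. Qed.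

Lemma unitary_tK (C : numClosedFieldType) n (U : 'M[C]_n) :
  U \is unitarymx -> U^t* *m U = 1%:M.
Proof.
move=> Uu; rewrite -invmx_unitary //; exact: mulVmx (unitarymx_unit Uu).
Qed.

Lemma tr_conj1 (C : numClosedFieldType) n (U M : 'M[C]_n) :
  U \is unitarymx -> \tr (U *m M *m U^t*) = \tr M.
Proof.
by move=> Uu; rewrite mxtrace_mulC mulmxA unitary_tK // mul1mx.
Qed.

Lemma spec_eq (C : numClosedFieldType) n (A : 'M[C]_n) :
  A \is hermsymmx ->
  A = (spectralmx A)^t* *m diag_mx (spectral_diag A) *m spectralmx A.
Proof.
move=> /hermitian_normalmx /orthomx_spectralP {1}->.
by rewrite invmx_unitary // spectral_unitarymx.
Qed.

Lemma spec_diag (C : numClosedFieldType) n (A : 'M[C]_n) :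
  A \is hermsymmx ->
  spectralmx A *m A *m (spectralmx A)^t* = diag_mx (spectral_diag A).
Proof.
move=> hA; have Uu := spectral_unitarymx A.
rewrite {2}(@spec_eq _ _ _ hA) !mulmxA (unitarymxP Uu) mul1mx -mulmxA (unitarymxP Uu).
by rewrite mulmx1.
Qed.

Lemma diag_entry (C : numClosedFieldType) n (U X : 'M[C]_n) k :
  (U *m X *m U^t*) k k = (row k U *m X *m (row k U)^t*) 0 0.
Proof.
rewrite !mxE; apply: eq_bigr => j _; rewrite !mxE; congr (_ * _).
by apply: eq_bigr => l _; rewrite !mxE.
Qed.

Lemma psd_entry (R : realType) n (U X : 'M[R[i]]_n) k :
  psdmx X -> 0 <= (U *m X *m U^t*) k k.
Proof. by move=> [_ h]; rewrite diag_entry. Qed.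

Lemma density_diag (R : realType) n (U X : 'M[R[i]]_n) :
  U \is unitarymx -> densities n X ->
  (forall k, 0 <= (U *m X *m U^t*) k k <= 1) /\
  \sum_k (U *m X *m U^t*) k k = 1.
Proof.
move=> Uu [hX trX].
have hs : \sum_k (U *m X *m U^t*) k k = 1 by rewrite -trX -(@tr_conj1 _ _ U X) //.
split=> // k; rewrite psd_entry //=.
rewrite -hs (bigD1 k) //= lerDl; apply: sumr_ge0 => i _; exact: psd_entry.
Qed.
Arguments herm_tC {C n A}. Arguments unitary_tK {C n U}. Arguments tr_conj1 {C n U} M.
Arguments spec_eq {C n A}. Arguments spec_diag {C n A}. Arguments psd_entry {R n} U {X} k.
Arguments density_diag {R n U X}.
Lemma reC_sum (R : realType) n (f : 'I_n -> R[i]) :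
  reC (\sum_k f k) = \sum_k reC (f k).
Proof.
elim/big_rec2: _ => [//|k y z _ <-]; by case: (f k); case: z.
Qed.

Lemma reC_real (R : realType) (x : R) : reC (x%:C)%C = x.
Proof. by []. Qed.

Lemma reC_mulr (R : realType) (x : R) (z : R[i]) : reC ((x%:C)%C * z) = x * reC z.
Proof. by case: z => a b; rewrite /reC /= mul0r subr0. Qed.

Lemma hreg_eq (R : realType) n (theta : R -> R) (X : 'M[R[i]]_n) :
  hreg theta X = \sum_k theta (reC (spectral_diag X 0 k)).
Proof.
rewrite /hreg /mxfun mxtrace_mulC mulmxA mulmxV ?spectral_unit // mul1mx.
rewrite mxtrace_diag reC_sum; apply: eq_bigr => k _; by rewrite mxE.
Qed.
Arguments reC_sum {R n} f. Arguments hreg_eq {R n} theta X.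
Lemma dreal (R : realType) n (Y : 'M[R[i]]_n) k :
  Y \is hermsymmx -> ((reC (spectral_diag Y 0 k))%:C)%C = spectral_diag Y 0 k.
Proof.
move=> hY; have := mxOverP (hermitian_spectral_diag_real hY) 0 k.
exact: RRe_real.
Qed.

Lemma dens_eig (R : realType) n (X : 'M[R[i]]_n) k :
  densities n X -> 0 <= reC (spectral_diag X 0 k) <= 1.
Proof.
move=> hX; have [h _] := density_diag (spectral_unitarymx X) hX.
have := h k; rewrite spec_diag; last by case: hX => -[].
rewrite mxE eqxx mulr1n !lecE => /andP[/andP[_ h1] /andP[_ h2]].
by rewrite /reC h1.
Qed.

Arguments dreal {R n Y} k. Arguments dens_eig {R n X} k.

Lemma hreg_bounds (R : realType) n (theta : R -> R) (mn mx : R) (X : 'M[R[i]]_n) :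
  (forall x, 0 <= x <= 1 -> mn <= theta x <= mx) -> densities n X ->
  n%:R * mn <= hreg theta X <= n%:R * mx.
Proof.
move=> hb hX; rewrite hreg_eq.
have e : forall c : R, \sum_(k < n) c = n%:R * c.
  by move=> c; rewrite sumr_const card_ord mulr_natl.
rewrite -!e; apply/andP; split; apply: ler_sum => k _;
  by have /andP[] := hb _ (dens_eig k hX).
Qed.

Lemma trdot_formula (R : realType) n (Y X : 'M[R[i]]_n) :
  Y \is hermsymmx ->
  trdot Y X = \sum_k reC (spectral_diag Y 0 k) *
      reC ((spectralmx Y *m X *m (spectralmx Y)^t*) k k).
Proof.
move=> hY; rewrite /trdot {1}(spec_eq hY) -!mulmxA mxtrace_mulC !mulmxA.
set M := spectralmx Y *m X *m _.
have -> : diag_mx (spectral_diag Y) *m spectralmx Y *m X *m (spectralmx Y)^t*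
   = diag_mx (spectral_diag Y) *m M by rewrite /M !mulmxA.
rewrite mul_diag_mx /mxtrace reC_sum; apply: eq_bigr => k _.
by rewrite mxE -(dreal k hY) reC_mulr.
Qed.
Arguments hreg_bounds {R n theta mn mx X}. Arguments trdot_formula {R n Y} X.
Lemma mx11_mul (C : numClosedFieldType) (A B : 'M[C]_1) : (A *m B) 0 0 = A 0 0 * B 0 0.
Proof. by rewrite mxE big_ord1. Qed.

Lemma rank1_density (R : realType) n (U : 'M[R[i]]_n) k :
  U \is unitarymx -> densities n ((row k U)^t* *m row k U).
Proof.
move=> Uu; set u := row k U.
have hc : forall v : 'rV[R[i]]_n, u *m v^t* = (v *m u^t*)^t*.
  by move=> v; rewrite trmx_mul map_mxM trmxCK.
split; [split|].
- apply/is_hermitianmxP; rewrite expr0 scale1r.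
  by rewrite trmx_mul map_mxM trmxCK.
- move=> v; rewrite !mulmxA -(mulmxA (v *m u^t*)) mx11_mul hc.
  rewrite [X in _ * X]mxE [X in _ * X^*]mxE.
  exact: mul_conjC_ge0.
- rewrite mxtrace_mulC /mxtrace big_ord1 -dotmxE.
  by rewrite (row_unitarymxP Uu) eqxx.
Qed.

Lemma trdot_rank1 (R : realType) n (Z : 'M[R[i]]_n) k :
  Z \is hermsymmx ->
  trdot Z ((row k (spectralmx Z))^t* *m row k (spectralmx Z)) =
  reC (spectral_diag Z 0 k).
Proof.
move=> hZ; rewrite /trdot mulmxA mxtrace_mulC mulmxA /mxtrace big_ord1.
by rewrite -diag_entry (spec_diag hZ) mxE eqxx mulr1n.
Qed.
Lemma reC01 (R : realType) (z : R[i]) : 0 <= z <= 1 -> 0 <= reC z <= 1.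
Proof. by rewrite !lecE => /andP[/andP[_ h1] /andP[_ h2]]; rewrite /reC h1. Qed.

Lemma reC_ge0 (R : realType) (z : R[i]) : 0 <= z -> 0 <= reC z.
Proof. by rewrite !lecE => /andP[_ h1]. Qed.

Arguments reC01 {R z}. Arguments reC_ge0 {R z}.

Lemma trdot_le (R : realType) n (Y X : 'M[R[i]]_n) :
  Y \is hermsymmx -> densities n X ->
  trdot Y X <= \sum_k `|reC (spectral_diag Y 0 k)|.
Proof.
move=> hY hX; rewrite trdot_formula //; apply: ler_sum => k _.
have [h _] := density_diag (spectral_unitarymx Y) hX.
have /andP[c0 c1] := reC01 (h k).
apply: le_trans (ler_wpM2r c0 (ler_norm _)) _.
by rewrite -[leRHS]mulr1 ler_wpM2l.
Qed.

Lemma hconj_ge (R : realType) n (theta : R -> R) (mn mx : R) (Y X : 'M[R[i]]_n) :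
  (forall x, 0 <= x <= 1 -> mn <= theta x <= mx) -> Y \is hermsymmx ->
  densities n X -> trdot Y X - hreg theta X <= hconj theta Y.
Proof.
move=> hb hY hX; rewrite /hconj; apply: ub_le_sup; last by exists X.
exists (\sum_k `|reC (spectral_diag Y 0 k)| - n%:R * mn).
move=> _ [X' hX' <-]; apply: lerB; first exact: trdot_le.
by have /andP[] := hreg_bounds hb hX'.
Qed.
Lemma posdef_lb (R : realType) n (P : 'M[R[i]]_n) : (0 < n)%N -> posdefmx P ->
  exists2 p, 0 < p & forall (U : 'M[R[i]]_n) k, U \is unitarymx ->
    p <= reC ((U *m P *m U^t*) k k).
Proof.
move=> hn [hP hpos].
set V := spectralmx P; set L := spectral_diag P.
have Vu : V \is unitarymx by exact: spectral_unitarymx.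
have Lpos : forall j, 0 < reC (L 0 j).
  move=> j; have : row j V != 0.
    apply/eqP => h0; have := (row_unitarymxP Vu) j j.
    rewrite dotmxE h0 mul0mx mxE eqxx => /eqP; by rewrite eq_sym oner_eq0.
  move/hpos; rewrite -diag_entry (spec_diag hP) mxE eqxx mulr1n ltcE.
  by case/andP.
pose j0 := [arg min_(j < Ordinal hn) reC (L 0 j)]%O.
have hj0 : forall j, reC (L 0 j0) <= reC (L 0 j).
  rewrite /j0; case: arg_minP => // i _ hi j; exact: hi.
exists (reC (L 0 j0)); first exact: Lpos.
move=> U k Uu; rewrite diag_entry; set u := row k U.
set a := u *m V^t*.
have -> : u *m P *m u^t* = a *m diag_mx L *m a^t*.
  by rewrite {1}(spec_eq hP) /a trmx_mul map_mxM trmxCK !mulmxA.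
have ha : (a *m a^t*) 0 0 = 1.
  rewrite /a trmx_mul map_mxM trmxCK mulmxA -(mulmxA u) unitary_tK //.
  by rewrite mulmx1 -dotmxE (row_unitarymxP Uu) eqxx.
have ha' : reC ((a *m a^t*) 0 0) = 1 by rewrite ha.
rewrite -[leLHS]mulr1 -ha' mul_mx_diag mxE [X in _ <= reC X]mxE.
rewrite !reC_sum mulr_sumr; apply: ler_sum => j _.
rewrite !mxE -(dreal j hP) -/L.
rewrite [X in _ <= reC X]mulrAC [X in _ <= reC X]mulrC reC_mulr [leRHS]mulrC.
rewrite [leLHS]mulrC; apply: ler_wpM2l; last exact: hj0.
apply: reC_ge0; exact: mul_conjC_ge0.
Qed.
Lemma eig_diag (R : realType) n (Z : 'M[R[i]]_n) z :
  Z \is hermsymmx -> eigenvalue Z z -> exists k, z = spectral_diag Z 0 k.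
Proof.
move=> hZ /eigenvalueP [v hv nz].
set U := spectralmx Z; set D := spectral_diag Z.
have Uu : U \is unitarymx by exact: spectral_unitarymx.
set w := v *m U^t*.
have hw : w *m diag_mx D = z *: w.
  move: hv; rewrite {1}(spec_eq hZ) -/U -/D => /(congr1 (fun M => M *m U^t*)).
  by rewrite !mulmxA mulmxtVK // -scalemxAl.
have [j hj] : exists j, w 0 j != 0.
  apply/existsP; apply: contraR nz => /existsPn h.
  have w0 : w = 0.
    apply/rowP => j; rewrite [in RHS]mxE; by move: (h j); rewrite negbK => /eqP.
  by rewrite -(mulmxKtV v Uu erefl) -/w w0 mul0mx.
exists j; move/rowP: hw => /(_ j); rewrite mul_mx_diag [in LHS]mxE [in RHS]mxE => e.
by apply: (mulfI hj); rewrite mulrC -e.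
Qed.
Arguments posdef_lb {R n P}. Arguments eig_diag {R n Z z}. Arguments hconj_ge {R n theta mn mx Y X}.
Arguments rank1_density {R n U} k. Arguments trdot_rank1 {R n Z} k.
Theorem lemmaE2 (R : realType) (d : nat) (theta : R -> R)
  (hd : (0 < d)%N) (htheta : admissible_theta theta)
  (P : 'M[R[i]]_d) (hPX : densities d P) (hPpd : posdefmx P)
  (Z : nat -> 'M[R[i]]_d)
  (hZherm : forall n, Z n \is hermsymmx)
  (hZtr : forall n, \tr (Z n) = 0)
  (hF : forall n, fenchel theta P (Z n) = fenchel theta P (Z 0%N)) :
  exists M : R, forall (n : nat) (z : R[i]),
    eigenvalue (Z n) z -> `|z| <= (M%:C)%C.
Proof.
case: htheta => hcont [_ _].
have h01 : (0:R) <= 1 by [].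
have [cmx _ hmx] := EVT_max h01 hcont.
have [cmn _ hmn] := EVT_min h01 hcont.
set mx := theta cmx; set mn := theta cmn.
have hb : forall x : R, 0 <= x <= 1 -> mn <= theta x <= mx.
  move=> x hx; have hx' : x \in `[0, 1]%R by rewrite in_itv /=.
  by rewrite hmx // hmn.
have [p p0 hp] := posdef_lb hd hPpd.
pose B := fenchel theta P (Z 0%N) - hreg theta P + d%:R * mx.
exists (B / p) => n z hz.
have hZ := hZherm n.
have [k ->] := eig_diag hZ hz.
set U := spectralmx (Z n); set D := spectral_diag (Z n).
pose lam j := reC (D 0 j).
pose w j := reC ((U *m P *m U^t*) j j).
have Uu : U \is unitarymx by exact: spectral_unitarymx.
have hsl : \sum_j lam j = 0.
  have := hZtr n; rewrite -(tr_conj1 (Z n) Uu) spec_diag // mxtrace_diag => e.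
  by rewrite /lam -reC_sum -/D e.
have hsw : \sum_j w j = 1.
  have [_ e] := density_diag Uu hPX; by rewrite /w -reC_sum e.
have htr : trdot P (Z n) = \sum_j lam j * w j.
  by rewrite /trdot mxtrace_mulC -/(trdot (Z n) P) (trdot_formula P hZ).
pose imax := [arg max_(j > k) lam j]%O.
have himax : forall j, lam j <= lam imax.
  rewrite /imax; case: arg_maxP => // i _ hi j; exact: hi.
set lmax := lam imax.
have hc : lmax - d%:R * mx <= hconj theta (Z n).
  have h1 := hconj_ge hb hZ (rank1_density imax Uu).
  have /andP[_ h2] := hreg_bounds hb (rank1_density imax Uu).
  rewrite trdot_rank1 // in h1.
  have : lam imax = reC (spectral_diag (Z n) 0 imax) by [].
  move=> e; rewrite /lmax e; lra.
have hF' := hF n; rewrite /fenchel htr in hF'.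
have wge0 : forall j, 0 <= w j by move=> j; exact: le_trans (ltW p0) (hp _ _ Uu).
have key : \sum_j w j * (lmax - lam j) <= B.
  have -> : \sum_j w j * (lmax - lam j) = lmax - \sum_j lam j * w j.
    rewrite (eq_bigr (fun j => w j * lmax - lam j * w j)); last first.
      by move=> j _; rewrite mulrBr [lam j * _]mulrC.
    by rewrite sumrB -mulr_suml hsw mul1r.
  rewrite /B /fenchel -hF'; move: hc.
  move: (hconj theta (Z n)) (hreg theta P) (\sum_j lam j * w j) (d%:R * mx) lmax.
  move=> a b c e f hc; lra.
have hterm : forall l, p * (lmax - lam l) <= B.
  move=> l; apply: le_trans key.
  have xl : 0 <= lmax - lam l by rewrite subr_ge0.
  rewrite (bigD1 l) //; apply: le_trans (ler_wpM2r xl (hp _ l Uu)) _.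
  rewrite lerDl; apply: sumr_ge0 => j _; apply: mulr_ge0 => //.
  by rewrite subr_ge0.
have hBp : forall l, lmax - lam l <= B / p.
  by move=> l; rewrite ler_pdivlMr // mulrC; exact: hterm.
have hd0 : (0:R) < d%:R by rewrite ltr0n.
have lmax0 : 0 <= lmax.
  have : \sum_j lam j <= \sum_(j < d) lmax by apply: ler_sum.
  rewrite hsl sumr_const card_ord -mulr_natl => h.
  by move: h; rewrite pmulr_rge0.
have lmaxB : lmax <= B / p.
  move: hBp; move: (B / p) => c hBp.
  have : \sum_(j < d) (lmax - lam j) <= \sum_(j < d) c.
    by apply: ler_sum => j _; exact: hBp.
  have -> : \sum_(j < d) c = c *+ d by rewrite sumr_const card_ord.
  rewrite sumrB hsl subr0 sumr_const card_ord.
  by rewrite ler_pMn2r.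
have lk : `|lam k| <= B / p.
  rewrite ler_norml (le_trans (himax k) lmaxB) andbT lerNl.
  by apply: le_trans (hBp k); rewrite lerDr.
rewrite -(dreal k hZ) -/D -/(lam k).
rewrite normc_def /= expr0n /= addr0 sqrtr_sqr lecR //.
Qed.
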